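(* In any execution of Algorithm $\gamma$n-Burst, within any time interval $I^-$ during which at all times at least $n^2$ tasks of cost $\ell_{\min}$ are pending in $\gamma$n-Burst, each $\ell_{\min}$-task has at most one absolute task execution fully contained in $I^-$ (all such absolute task executions appear exactly once).
   Context: Model: $n$ processors with ids $1,\dots,n$ and a shared repository; tasks with ids, arrival times and costs $\ell_{\min}$ or $\ell_{\max}$ ($0<\ell_{\min}<\ell_{\max}$) are injected over time; processors may crash and restart (restarted processors remember only the algorithm and $n$). A task is pending if injected and its completion not yet reported; once reported it is immediately removed. A processor repeatedly obtains the pending set, chooses a task, executes it (a task of cost $\ell$ takes time $\ell/s$ with speedup $s>1$) and reports it; execution is non-preemptive and a crash loses progress. An absolute task execution of $\tau$ is an interval $[t,t']$ in which a processor schedules $\tau$ at $t$ and reports it at $t'$ without stopping in $[t,t')$. Algorithm $\gamma$n-Burst for processor $p$, with $\gamma=\lceil\frac{\ell_{\max}-s\ell_{\min}}{(s-1)\ell_{\min}}\rceil$: counter $c$ set to $0$ on (re)start; each cycle it forms lists $L_{\min},L_{\max}$ of pending tasks of cost $\ell_{\min},\ell_{\max}$ sorted by arrival. Case 1 (both lists $<n^2$): if previous task had cost $\ell_{\min}$, perform task at position $(pn)\bmod|L_{\max}|$ of $L_{\max}$, $c\gets0$; else task at position $(pn)\bmod|L_{\min}|$ of $L_{\min}$, $c\gets\min(c+1,\gamma)$. Case 2 ($|L_{\min}|\ge n^2>|L_{\max}|$): position $pn$ of $L_{\min}$, $c\gets\min(c+1,\gamma)$. Case 3 ($|L_{\max}|\ge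 n^2>|L_{\min}|$): position $pn$ of $L_{\max}$, $c\gets0$. Case 4 (both $\ge n^2$): if $c=\gamma$, position $pn$ of $L_{\max}$, $c\gets0$; else position $pn$ of $L_{\min}$, $c\gets\min(c+1,\gamma)$. Then report the task. *)

(* Defs.v *)
From HB Require Import structures.
From mathcomp Require Import all_boot all_order all_algebra.
Set Implicit Arguments. Unset Strict Implicit. Unset Printing Implicit Defensive.
Import Order.TTheory GRing.Theory Num.Theory.

Local Open Scope ring_scope.

Section GammaNBurst.
Variable R : archiRealFieldType.
(* n processors with ids 1..n, costs lmin < lmax, speedup s *)
Variables (n : nat) (lmin lmax s : R).

Definition gamma : int := Num.ceil ((lmax - s * lmin) / ((s - 1) * lmin)).

(* Tasks are identified by their ids (nat).
   Processor p (1 <= p <= n) performs a sequence of cycles k = 0,1,2,...: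
   - active p k : cycle k of p takes place;
   - rdy p k    : time from which p is up and waiting for cycle k
                  ((re)start time or the time the previous task was reported);
   - st p k     : time at which p obtains the pending set and chooses a task;
   - tk p k     : the chosen task;
   - done p k   : p executes tk p k without crashing and reports it
                  (otherwise p crashes during the execution and progress is lost);
   - restart p k: p crashed since the end of cycle k-1 and was restarted
                  before cycle k (so its counter and memory are reset).
   - pend t     : the set of pending tasks at time t, as a list. *)
Record execution := Execution {
  injected : pred nat;
  arrival : nat -> R;
  is_min : pred nat;
  pend : R -> seq nat;
  active : nat -> nat -> bool;
  rdy : nat -> nat -> R;
  st : nat -> nat -> R;
  tk : nat -> nat -> nat;
  done : nat -> nat -> bool;
  restart : nat -> nat -> bool
}.

Variable E : execution.

Definition cost (x : nat) : R := if is_min E x then lmin else lmax.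

(* report time of cycle k of p (if done) *)
Definition fin (p k : nat) : R := st E p k + cost (tk E p k) / s.

Definition arr_le (x y : nat) : bool :=
  (arrival E x < arrival E y) || ((arrival E x == arrival E y) && (x <= y)%N).

(* One choice step of gamma n-Burst for processor p, with counter c,
   cost of the previous task prev (Some true = lmin, Some false = lmax,
   None = no previous task since the last (re)start), and pending set P.
   Returns the chosen task and the new counter value.
   Positions "pn" in cases 2-4 are 1-based (index pn-1), positions
   "(pn) mod |L|" in case 1 are 0-based. *)
Definition choose (p : nat) (c : int) (prev : option bool) (P : seq nat)
    : option (nat * int) :=
  let Lmin := sort arr_le [seq x <- P | is_min E x] in
  let Lmax := sort arr_le [seq x <- P | ~~ is_min E x] in
  let N2 := (n ^ 2)%N in
  let from_min (i : nat) := Some (nth 0%N Lmin i, Order.min (c + 1) gamma) in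
  let from_max (i : nat) := Some (nth 0%N Lmax i, 0 : int) in
  if (size Lmin < N2)%N && (size Lmax < N2)%N then
    if prev == Some true then
      if size Lmax != 0%N then from_max ((p * n) %% size Lmax)%N
      else if size Lmin != 0%N then from_min ((p * n) %% size Lmin)%N
      else None
    else
      if size Lmin != 0%N then from_min ((p * n) %% size Lmin)%N
      else if size Lmax != 0%N then from_max ((p * n) %% size Lmax)%N
      else None
  else if (size Lmax < N2)%N then from_min (p * n).-1
  else if (size Lmin < N2)%N then from_max (p * n).-1
  else if c == gamma then from_max (p * n).-1
  else from_min (p * n).-1.

(* local state (counter, cost of previous task) of p at the start of cycle k *)
Fixpoint state (p k : nat) : int * option bool :=
  match k with
  | 0 => (0, None)
  | k'.+1 =>
      if restart E p k then (0, None) else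
      match choose p (state p k').1 (state p k').2 (pend E (st E p k')) with
      | Some (x, c') => (c', Some (is_min E x))
      | None => (0, None)
      end
  end.

Definition proc (p : nat) : bool := (0 < p <= n)%N.

Definition reported_by (x : nat) (t : R) : Prop :=
  exists p k, [/\ proc p, active E p k, done E p k, tk E p k = x & fin p k <= t].

Definition valid_exec : Prop :=
  [/\
      (forall t x, x \in pend E t <->
         [/\ injected E x, arrival E x <= t & ~ reported_by x t]),
      (forall t, uniq (pend E t)) &
      (forall p, proc p ->
       [/\ 0 <= rdy E p 0,
           (forall k, active E p k.+1 -> active E p k),
           (forall k, active E p k ->
              [/\ rdy E p k <= st E p k,
                  (forall t, rdy E p k <= t < st E p k -> pend E t = [::]) &
                  omap fst (choose p (state p k).1 (state p k).2 (pend E (st E p k)))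
                    = Some (tk E p k)]) &
           (forall k, active E p k ->
              if done E p k then
                (if restart E p k.+1 then (fin p k <= rdy E p k.+1 : Prop)
                 else rdy E p k.+1 = fin p k /\
                      (~~ active E p k.+1 -> forall t, fin p k <= t -> pend E t = [::]))
              else restart E p k.+1 /\ st E p k <= rdy E p k.+1)])].

(* (p,k) is an absolute task execution of x: p schedules x at st p k and reports
   it at fin p k without stopping in between *)
Definition abs_exec (x p k : nat) : bool :=
  [&& proc p, active E p k, done E p k & tk E p k == x].

End GammaNBurst.

(* Main.v *)
Require Import Defs.
From HB Require Import structures.
From mathcomp Require Import all_boot all_order all_algebra.
From mathcomp Require Import zify lra.
From Stdlib Require Import Classical.
Import Order.TTheory GRing.Theory Num.Theory.
Set Implicit Arguments. Unset Strict Implicit.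
Local Open Scope ring_scope.

Local Open Scope nat_scope.
Lemma arith (n a b A B D S : nat) : (0 < a <= n) -> (0 < b <= n) ->
  A = (b * n).-1 -> B = (a * n).-1 -> A <= B -> B <= A + D -> D <= S -> S < n -> a = b.
Proof.
move=> /andP[a0 an] /andP[b0 bn] -> -> h1 h2 h3 h4.
have n0 : 0 < n by lia.
have an0 : 0 < a * n by rewrite muln_gt0 a0.
have bn0 : 0 < b * n by rewrite muln_gt0 b0.
have : b * n <= a * n.
  move: h1 an0 bn0; set X := a * n; set Y := b * n; lia.
rewrite leq_mul2r => /orP[/eqP n00|ba]; first by rewrite n00 in n0.
have : a * n < (b + 1) * n.
  rewrite mulnDl mul1n.
  move: h2 h3 h4 an0 bn0; set X := a * n; set Y := b * n; lia.
rewrite ltn_mul2r => /andP[_ ab]; lia.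
Qed.
Local Open Scope ring_scope.

Lemma arr_le_trans (R : archiRealFieldType) (E : execution R) :
  transitive (arr_le E).
Proof.
move=> y x z; rewrite /arr_le.
case/orP=> [h1|/andP[/eqP e1 h1]]; case/orP=> [h2|/andP[/eqP e2 h2]].
- by rewrite (lt_trans h1 h2).
- by rewrite -e2 h1.
- by rewrite e1 h2.
- by rewrite e1 e2 eqxx (leq_trans h1 h2) orbT.
Qed.

Lemma arr_le_total (R : archiRealFieldType) (E : execution R) :
  total (arr_le E).
Proof.
move=> x y; rewrite /arr_le.
case: (ltgtP (arrival E x) (arrival E y)) => //= _.
by rewrite leq_total.
Qed.

Lemma arr_le_anti (R : archiRealFieldType) (E : execution R) x y :
  arr_le E x y -> arr_le E y x -> x = y.
Proof.
rewrite /arr_le.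
case: (ltgtP (arrival E x) (arrival E y)) => //= _ h1 h2.
by apply/eqP; rewrite eqn_leq h1 h2.
Qed.

Lemma arr_le_refl (R : archiRealFieldType) (E : execution R) x : arr_le E x x.
Proof. by rewrite /arr_le eqxx leqnn orbT. Qed.

Lemma count_before (R : archiRealFieldType) (E : execution R) (L : seq nat) i :
  sorted (arr_le E) L -> uniq L -> (i < size L)%N ->
  count (fun y => arr_le E y (nth 0%N L i) && (y != nth 0%N L i)) L = i.
Proof.
elim: L i => [|y L IH] i //= hs /andP[yL uL] hi.
have hall := order_path_min (@arr_le_trans R E) hs.
have sL : sorted (arr_le E) L by case: L hs {IH hall yL uL hi} => //= z L /andP[].
case: i hi => [|j] hj /=.
- rewrite eqxx andbF add0n.
  apply/eqP; rewrite -leqn0 leqNgt -has_count; apply/hasPn => z zL /=.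
  have := allP hall z zL => hyz; apply/negP => /andP[hzy nzy].
  by move: nzy; rewrite (@arr_le_anti R E _ _ hzy hyz) eqxx.
- have xL : nth 0%N L j \in L by apply: mem_nth.
  rewrite (allP hall _ xL) /= (IH j sL uL hj).
  have -> : y != nth 0%N L j by apply/eqP => e; move: yL; rewrite e xL.
  by [].
Qed.

Lemma pigeon (W : nat -> nat -> Prop) (D S : seq nat) :
  uniq D -> (forall y, y \in D -> exists2 q, q \in S & W y q) ->
  (forall y y' q, y \in D -> y' \in D -> W y q -> W y' q -> y = y') ->
  (size D <= size S)%N.
Proof.
elim: D S => [|y D IH] S //= /andP[yD uD] hW hinj.
have [q qS Wq] := hW y (mem_head _ _).
have hlt : (size [seq z <- S | z != q] < size S)%N.
  rewrite size_filter -(count_predC (fun z => z != q) S) -addn1 leq_add2l.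
  rewrite lt0n; apply/negP => /eqP h.
  have : ~~ has (predC (fun z => z != q)) S by rewrite has_count h.
  by move/hasPn => /(_ q qS) /=; rewrite eqxx.
have sub : forall z, z \in D -> z \in y :: D by move=> z zD; rewrite inE zD orbT.
suff : (size D <= size [seq z <- S | z != q])%N by move=> h; apply: leq_ltn_trans hlt.
apply: IH => //.
- move=> y' y'D; have [q' q'S Wq'] := hW y' (sub _ y'D).
  exists q' => //; rewrite mem_filter q'S andbT; apply/eqP => e; subst q'.
  have e := hinj y y' q (mem_head _ _) (sub _ y'D) Wq Wq'.
  by move: yD; rewrite e y'D.
- by move=> a b c aD bD; apply: hinj; apply: sub.
Qed.
Lemma choose_min (R : archiRealFieldType) n (lmin lmax s : R) (E : execution R) p c prev P x :
  proc n p -> (n ^ 2 <= count (is_min E) P)%N -> is_min E x ->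
  omap fst (Defs.choose n lmin lmax s E p c prev P) = Some x ->
  x = nth 0%N (sort (arr_le E) [seq y <- P | is_min E y]) (p * n).-1 /\
  ((p * n).-1 < size (sort (arr_le E) [seq y <- P | is_min E y]))%N.
Proof.
move=> /andP[p0 pn] hc hx.
have hidx : ((p * n).-1 < n ^ 2)%N.
  have : (p * n <= n * n)%N by rewrite leq_mul2r pn orbT.
  rewrite expnS expn1; case: (p * n)%N => //= m; lia.
have hsz : ((p * n).-1 < size (sort (arr_le E) [seq y <- P | is_min E y]))%N.
  by rewrite size_sort size_filter; apply: leq_trans hc.
rewrite /Defs.choose.
set Lmin := sort _ [seq y <- P | is_min E y].
set Lmax := sort _ [seq y <- P | ~~ is_min E y].
have -> : (size Lmin < n ^ 2)%N = false.
  by apply/negbTE; rewrite -leqNgt /Lmin size_sort size_filter.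
rewrite /=.
case: ifP => hmax; first by move=> [] <-.
have hin : nth 0%N Lmax (p * n).-1 \in Lmax.
  by apply: mem_nth; apply: leq_trans hidx _; rewrite leqNgt hmax.
have hnm : ~~ is_min E (nth 0%N Lmax (p * n).-1).
  by move: hin; rewrite /Lmax mem_sort mem_filter => /andP[].
case: ifP => _ [] e; last by rewrite -e.
by move: hnm; rewrite e hx.
Qed.
Lemma fin_ge (R : archiRealFieldType) (lmin lmax s : R) (E : execution R) p k :
  0 < lmin -> lmin < lmax -> 0 < s ->
  st E p k + lmin / s <= fin lmin lmax s E p k.
Proof.
move=> h0 h1 hs; rewrite /fin lerD2l /cost.
have hsi : 0 <= s^-1 by rewrite invr_ge0 ltW.
case: ifP => _ //; apply: ler_wpM2r => //; exact: ltW.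
Qed.

Lemma step (R : archiRealFieldType) n (lmin lmax s : R) (E : execution R) p k :
  0 < lmin -> lmin < lmax -> 0 < s ->
  valid_exec n lmin lmax s E -> proc n p -> active E p k.+1 ->
  [/\ st E p k <= st E p k.+1 & (done E p k -> fin lmin lmax s E p k <= st E p k.+1)].
Proof.
move=> h0 h1 hs [_ _ hP] pp ak1.
have [_ hact hcyc htr] := hP p pp.
have ak := hact k ak1.
have [r1 _ _] := hcyc k.+1 ak1.
have [r0 _ _] := hcyc k ak.
have hf := @fin_ge R lmin lmax s E p k h0 h1 hs.
have hls : 0 < lmin / s by rewrite divr_gt0.
have := htr k ak; case: (done E p k) => /=.
- case: (restart E p k.+1) => [hr|[hr _]]; split => [|_]; lra.
- by case=> _ hr; split => //; lra.
Qed.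

Lemma st_mono (R : archiRealFieldType) n (lmin lmax s : R) (E : execution R) p k j :
  0 < lmin -> lmin < lmax -> 0 < s ->
  valid_exec n lmin lmax s E -> proc n p -> active E p (k + j) ->
  st E p k <= st E p (k + j).
Proof.
move=> h0 h1 hs hv pp; elim: j => [|j IH]; first by rewrite addn0.
rewrite addnS => a; have [_ hact _ _] := (let: And3 _ _ hP := hv in hP p pp).
have [e _] := step h0 h1 hs hv pp a.
exact: le_trans (IH (hact _ a)) e.
Qed.

Lemma fin_before (R : archiRealFieldType) n (lmin lmax s : R) (E : execution R) p k k' :
  0 < lmin -> lmin < lmax -> 0 < s ->
  valid_exec n lmin lmax s E -> proc n p -> active E p k' -> (k < k')%N -> done E p k ->
  fin lmin lmax s E p k <= st E p k'.
Proof.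
move=> h0 h1 hs hv pp ak lt dk.
have [j ej] : exists j, k' = (k.+1 + j)%N by exists (k' - k.+1)%N; lia.
subst k'.
have [_ hact _ _] := (let: And3 _ _ hP := hv in hP p pp).
have ak1 : active E p k.+1.
  clear lt; move: ak; elim: j => [|j IH]; first by rewrite addn0.
  by rewrite addnS => a; apply: IH; apply: hact.
have [_ e] := step h0 h1 hs hv pp ak1.
exact: le_trans (e dk) (st_mono h0 h1 hs hv pp ak).
Qed.

Lemma posQ (R : archiRealFieldType) (E : execution R) (P : seq nat) x i :
  uniq P -> x = nth 0%N (sort (arr_le E) [seq y <- P | is_min E y]) i ->
  (i < size (sort (arr_le E) [seq y <- P | is_min E y]))%N ->
  count (fun y => is_min E y && arr_le E y x && (y != x)) P = i /\ x \in P.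
Proof.
move=> uP ex hi; split.
- have := count_before (sort_sorted (@arr_le_total R E) _)
    (etrans (sort_uniq _ _) (filter_uniq _ uP)) hi.
  rewrite -ex (permP (permEl (perm_sort _ _))) count_filter => <-.
  by apply: eq_count => y /=; case: (is_min E y); rewrite ?andbT ?andbF.
- by have := mem_nth 0%N hi; rewrite -ex mem_sort mem_filter => /andP[].
Qed.

Lemma size_filter_neq (S : seq nat) q : q \in S ->
  (size [seq z <- S | z != q] < size S)%N.
Proof.
move=> qS.
rewrite size_filter -(count_predC (fun z => z != q) S) -addn1 leq_add2l.
rewrite lt0n; apply/negP => /eqP h.
have : ~~ has (predC (fun z => z != q)) S by rewrite has_count h.
by move/hasPn => /(_ q qS) /=; rewrite eqxx.
Qed.

Lemma reported_mono (R : archiRealFieldType) n (lmin lmax s : R) (E : execution R) y t t' :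
  reported_by n lmin lmax s E y t -> t <= t' -> reported_by n lmin lmax s E y t'.
Proof.
move=> [q [k [pq aq dq tq fq]]] tt; exists q, k; split => //; exact: le_trans tt.
Qed.

Lemma key (R : archiRealFieldType) (n : nat) (lmin lmax s : R)
    (E : execution R) (I : interval R) :
  (0 < n)%N -> 0 < lmin -> lmin < lmax -> 1 < s ->
  valid_exec n lmin lmax s E ->
  (forall t, t \in I -> (n ^ 2 <= count (is_min E) (pend E t))%N) ->
  forall x, is_min E x ->
  forall pa ka pb kb,
    abs_exec n E x pa ka -> st E pa ka \in I ->
    abs_exec n E x pb kb -> st E pb kb \in I ->
    st E pa ka <= st E pb kb ->
    pa = pb /\ ka = kb.
Proof.
move=> n0 l0 l1 s1 hv hI x hx pa ka pb kb.
move=> /and4P[ppa aa da /eqP ta] t1I /and4P[ppb ab db /eqP tb] t2I t12.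
have s0 : 0 < s by lra.
have hls : 0 < lmin / s by rewrite divr_gt0.
have [hpend huniq hP] := hv.
set t1 := st E pa ka in t1I t12 *; set t2 := st E pb kb in t2I t12 *.
set f1 := fin lmin lmax s E pa ka.
have ef1 : f1 = t1 + lmin / s by rewrite /f1 /fin /cost ta hx.
have [_ _ hca _] := hP pa ppa; have [_ _ ca] := hca ka aa.
have [_ _ hcb _] := hP pb ppb; have [_ _ cb] := hcb kb ab.
rewrite ta in ca; rewrite tb in cb.
have [xa ia] := choose_min ppa (hI _ t1I) hx ca.
have [xb ib] := choose_min ppb (hI _ t2I) hx cb.
have [cnta xin1] := posQ (huniq t1) xa ia.
have [cntb xin2] := posQ (huniq t2) xb ib.
have t2f1 : t2 < f1.
  rewrite ltNge; apply/negP => hf.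
  have [_ _ nr] := (hpend t2 x).1 xin2; apply: nr.
  by exists pa, ka; split.
have fge q k : st E q k + lmin / s <= fin lmin lmax s E q k by apply: fin_ge.
suff epab : pa = pb.
  subst pb; split => //.
  case: (ltngtP ka kb) => // hk.
  - have h := fin_before l0 l1 s0 hv ppa ab hk da.
    move: h; rewrite -/f1 -/t2 => h; exfalso; timeout 15 lra.
  - have h1 := fin_before l0 l1 s0 hv ppa aa hk db; move: h1; rewrite -/t1 => h1.
    have h2 := fge pa kb; move: h2; rewrite -/t2 => h2; exfalso; timeout 15 lra.
set Q := fun y => is_min E y && arr_le E y x && (y != x).
set A := [seq y <- pend E t2 | Q y].
set B := [seq y <- pend E t1 | Q y].
set D := [seq y <- pend E t1 | Q y && (y \notin pend E t2)].
have sA : size A = (pb * n).-1 by rewrite size_filter.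
have sB : size B = (pa * n).-1 by rewrite size_filter.
have AB : (size A <= size B)%N.
  apply: uniq_leq_size; first exact: filter_uniq.
  move=> y; rewrite !mem_filter => /andP[Qy y2]; rewrite Qy /=.
  have [inj ar nr] := (hpend t2 y).1 y2.
  have [_ arx _] := (hpend t1 x).1 xin1.
  apply/(hpend t1 y).2; split => //.
  + move: Qy; rewrite /Q /arr_le => /andP[/andP[_ h] _].
    apply: le_trans arx; case/orP: h => [/ltW //|/andP[/eqP -> _] //].
  + by move=> r; apply: nr; apply: reported_mono r _.
have BAD : (size B <= size A + size D)%N.
  rewrite -size_cat; apply: uniq_leq_size; first exact: filter_uniq.
  move=> y; rewrite mem_cat !mem_filter => /andP[Qy y1]; rewrite Qy y1 /=.
  by case: (y \in pend E t2).
set S := [seq q <- iota 1 n | q != pa].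
have sS : (size S < n)%N.
  have := @size_filter_neq (iota 1 n) pa; rewrite size_iota; apply.
  by move: ppa => /andP[h1 h2]; rewrite mem_iota h1 add1n ltnS h2.
have sD : (size D <= size S)%N.
  apply: (@pigeon (fun y q => exists k, proc n q /\ [/\ active E q k, done E q k, tk E q k = y,
                     t1 < fin lmin lmax s E q k & fin lmin lmax s E q k <= t2])).
  - exact: filter_uniq.
  - move=> y; rewrite mem_filter => /andP[/andP[Qy ny2] y1].
    have [inj ar nr] := (hpend t1 y).1 y1.
    have rep : reported_by n lmin lmax s E y t2.
      case: (classic (reported_by n lmin lmax s E y t2)) => // nrep; exfalso.
      have : y \in pend E t2.
        by apply/(hpend t2 y).2; split => //; exact: le_trans ar t12.
      by rewrite (negbTE ny2).
    have [q [k [pq aq dq tq fq]]] := rep.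
    have ft1 : t1 < fin lmin lmax s E q k.
      rewrite ltNge; apply/negP => h; apply: nr; exists q, k; split => //.
    exists q; last by exists k; split; [|split].
    rewrite mem_filter mem_iota; apply/andP; split; last first.
      by move: pq => /andP[h1 h2]; rewrite h1 add1n ltnS h2.
    apply/eqP => eq; subst q.
    have ykx : k != ka.
      apply/eqP => e; subst k; move: Qy; rewrite /Q -tq ta eqxx.
      by rewrite andbF.
    case: (ltngtP k ka) ykx => // hk _.
    + have h1 := fin_before l0 l1 s0 hv ppa aa hk dq; move: h1; rewrite -/t1 => h1.
      exfalso; timeout 15 lra.
    + have h1 := fin_before l0 l1 s0 hv ppa aq hk da; move: h1; rewrite -/f1 => h1.
      have h2 := fge pa k; exfalso; timeout 15 lra.
  - move=> y y' q _ _ [k [pq [ak dk tk1 f1k f2k]]] [k' [_ [ak' dk' tk2 f1k' f2k']]].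
    case: (ltngtP k k') => hk.
    + have h1 := fin_before l0 l1 s0 hv pq ak' hk dk.
      have h2 := fge q k'; exfalso; timeout 15 lra.
    + have h1 := fin_before l0 l1 s0 hv pq ak hk dk'.
      have h2 := fge q k; exfalso; timeout 15 lra.
    + by rewrite -tk1 -tk2 hk.
exact: (arith ppa ppb sA sB AB BAD sD sS).
Qed.

Unset Implicit Arguments. Set Strict Implicit.

Theorem lemma12 (R : archiRealFieldType) (n : nat) (lmin lmax s : R)
    (E : execution R) (I : interval R) :
  (0 < n)%N -> 0 < lmin -> lmin < lmax -> 1 < s ->
  valid_exec n lmin lmax s E ->
  (forall t, t \in I -> (n ^ 2 <= count (is_min E) (pend E t))%N) ->
  forall x, is_min E x ->
  forall p1 k1 p2 k2,
    abs_exec n E x p1 k1 -> st E p1 k1 \in I -> fin lmin lmax s E p1 k1 \in I ->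
    abs_exec n E x p2 k2 -> st E p2 k2 \in I -> fin lmin lmax s E p2 k2 \in I ->
    p1 = p2 /\ k1 = k2.
Proof.
move=> n0 l0 l1 s1 hv hI x hx p1 k1 p2 k2 a1 i1 _ a2 i2 _.
case: (lerP (st E p1 k1) (st E p2 k2)) => h.
- exact: (key n0 l0 l1 s1 hv hI hx a1 i1 a2 i2 h).
- have [-> ->] := key n0 l0 l1 s1 hv hI hx a2 i2 a1 i1 (ltW h); by [].
Qed.
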